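(* Let $\mathcal{M} = (\Sigma_\Box, Q, q_{in}, q_{fin}, \delta)$ be a Turing machine. There exist a closed term $\mathtt{trans} \in \Lambda_{\mathtt{det}}$ and a constant $c$ (depending only on $\mathcal{M}$) such that for every value $k$ and every configuration $C$: (1) if a final configuration $D$ is reachable from $C$ in $n$ transition steps of $\mathcal{M}$, then $\mathtt{trans}\;k\;\ulcorner C\urcorner \to_{\mathtt{det}}^{m} k\;\ulcorner D\urcorner$ for some $m \le c\,(n+1)$; (2) if no final configuration is reachable from $C$, then $\mathtt{trans}\;k\;\ulcorner C\urcorner$ diverges, i.e. it has an infinite $\to_{\mathtt{det}}$-reduction sequence.
   Context: The deterministic $\lambda$-calculus $\Lambda_{\mathtt{det}}$ has terms and values given by the grammar: terms $t ::= v \mid t\,v$; values $v ::= \lambda x.t \mid x$. Evaluation contexts are $E ::= [\cdot] \mid E\,v$ (they never enter abstractions). The reduction $\to_{\mathtt{det}}$ is the closure under evaluation contexts of $(\lambda x.t)\,s \mapsto t\{x:=s\}$; $t \to_{\mathtt{det}}^n s$ means $t$ reduces to $s$ in exactly $n$ steps. Application associates to the left. Scott encoding: for a finite totally ordered alphabet $\Gamma = \{c_1,\dots,c_m\}$, $\ulcorner c_i\urcorner^{\Gamma} := \lambda x_1.\cdots.\lambda x_m.x_i$, $\ulcorner \varepsilon\urcorner^{\Gamma^*} := \lambda x_1.\cdots.\lambda x_m.\lambda y.y$ and $\ulcorner c_i r\urcorner^{\Gamma^*} := \lambda x_1.\cdots.\lambda x_m.\lambda y.\,x_i\,\ulcorner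 r\urcorner^{\Gamma^*}$. Turing machines: $\mathcal{M} = (\Sigma_\Box, Q, q_{in}, q_{fin}, \delta)$ where $\Sigma = \{a_1,\dots,a_n\}$ is a finite alphabet, $\Sigma_\Box = \Sigma\cup\{\Box\}$ with blank symbol $\Box\notin\Sigma$ ordered last, $Q=\{q_1,\dots,q_m\}$ is a finite ordered set of states (treated as an alphabet for encoding), $q_{in},q_{fin}\in Q$, and $\delta : Q\times\Sigma_\Box \rightharpoonup Q\times\Sigma_\Box\times\{\leftarrow,\rightarrow,\downarrow\}$ is defined exactly on pairs with first component $\neq q_{fin}$. A configuration is $(s,a,r,q)\in\Sigma_\Box^*\times\Sigma_\Box\times\Sigma_\Box^*\times Q$ (tape left of the head, head cell, tape right of the head, state); it is final if $q = q_{fin}$. The transition relation $\to_{\mathcal{M}}$: if $\delta(q,a) = (q',b,\downarrow)$ then $(s,a,r,q)\to_{\mathcal{M}}(s,b,r,q')$; if $\delta(q,a)=(q',b,\leftarrow)$ then $(s'c,a,r,q)\to_{\mathcal{M}}(s',c,br,q')$ and $(\varepsilon,a,r,q)\to_{\mathcal{M}}(\varepsilon,\Box,br,q')$; if $\delta(q,a)=(q',b,\rightarrow)$ then $(s,a,cr',q)\to_{\mathcal{M}}(sb,c,r',q')$ and $(s,a,\varepsilon,q)\to_{\mathcal{M}}(sb,\Box,\varepsilon,q')$. Encoding of configurations: $\ulcorner (s,a,r,q)\urcorner := \lambda x.\, x\,\ulcorner s^R\urcorner^{\Sigma_\Box^*}\,\ulcorner a\urcorner^{\Sigma_\Box}\,\ulcorner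 r\urcorner^{\Sigma_\Box^*}\,\ulcorner q\urcorner^{Q}$, where $s^R$ is the reverse of $s$. *)

(* Defs.v *)
From mathcomp Require Import all_boot.
Set Implicit Arguments. Unset Strict Implicit. Unset Printing Implicit Defensive.

Inductive term : Type :=
| Val : value -> term
| App : term -> value -> term
with value : Type :=
| Var : nat -> value
| Lam : term -> value.

Fixpoint lift_t (k : nat) (t : term) : term :=
  match t with
  | Val v => Val (lift_v k v)
  | App t v => App (lift_t k t) (lift_v k v)
  end
with lift_v (k : nat) (v : value) : value :=
  match v with
  | Var n => if n < k then Var n else Var n.+1
  | Lam t => Lam (lift_t k.+1 t)
  end.

Fixpoint subst_t (k : nat) (s : value) (t : term) : term :=
  match t with
  | Val v => Val (subst_v k s v)
  | App t v => App (subst_t k s t) (subst_v k s v)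
  end
with subst_v (k : nat) (s : value) (v : value) : value :=
  match v with
  | Var n => if n < k then Var n else if n == k then s else Var n.-1
  | Lam t => Lam (subst_t k.+1 (lift_v 0 s) t)
  end.

Fixpoint closed_t (k : nat) (t : term) : bool :=
  match t with
  | Val v => closed_v k v
  | App t v => closed_t k t && closed_v k v
  end
with closed_v (k : nat) (v : value) : bool :=
  match v with
  | Var n => n < k
  | Lam t => closed_t k.+1 t
  end.

Inductive det_step : term -> term -> Prop :=
| det_beta (t : term) (s : value) : det_step (App (Val (Lam t)) s) (subst_t 0 s t)
| det_ctx (t t' : term) (v : value) : det_step t t' -> det_step (App t v) (App t' v).

Inductive det_steps : nat -> term -> term -> Prop :=
| det_refl (t : term) : det_steps 0 t t
| det_cons (n : nat) (t t' u : term) : det_step t t' -> det_steps n t' u -> det_steps n.+1 t u.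

Definition diverges (t : term) : Prop :=
  exists f : nat -> term, f 0 = t /\ forall i, det_step (f i) (f i.+1).

Fixpoint nlam (k : nat) (t : term) : term :=
  match k with 0 => t | k'.+1 => Val (Lam (nlam k' t)) end.

(* alphabet of size N = {c_1,...,c_N}; character c_(i+1) is represented by i < N *)
(* \x_1 ... \x_N . x_(i+1) *)
Definition scott_char (N i : nat) : value := Lam (nlam N.-1 (Val (Var (N.-1 - i)))).

(* strings: eps = \x_1..\x_N.\y.y ; c_(i+1) r = \x_1..\x_N.\y. x_(i+1) <r> *)
Fixpoint scott_str (N : nat) (w : seq nat) : value :=
  Lam (nlam N (match w with
               | [::] => Val (Var 0)
               | i :: r => App (Val (Var (N - i))) (scott_str N r)
               end)).

Inductive move : Type := MLeft | MRight | MStay.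

(* Sigma = {a_1..a_n} (n = nsym), Sigma_box = 'I_(n+1) with blank = ord_max (last);
   Q = 'I_nst ordered as q_1 < ... < q_m. *)
Record TM : Type := {
  nsym : nat;
  nst : nat;
  q_in : 'I_nst;
  q_fin : 'I_nst;
  delta : 'I_nst -> 'I_nsym.+1 -> option ('I_nst * 'I_nsym.+1 * move);
  delta_dom : forall q a, isSome (delta q a) = (q != q_fin)
}.

Definition blank (M : TM) : 'I_(nsym M).+1 := ord_max.

(* configuration (s, a, r, q); s is the tape left of the head in left-to-right order *)
Definition config (M : TM) : Type :=
  (seq 'I_(nsym M).+1 * 'I_(nsym M).+1 * seq 'I_(nsym M).+1 * 'I_(nst M))%type.

Definition final (M : TM) (C : config M) : Prop := C.2 = @q_fin M.

Inductive tm_step (M : TM) : config M -> config M -> Prop :=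
| tm_stay s a r q q' b :
    @delta M q a = Some (q', b, MStay) -> tm_step (s, a, r, q) (s, b, r, q')
| tm_left s' c a r q q' b :
    @delta M q a = Some (q', b, MLeft) -> tm_step (rcons s' c, a, r, q) (s', c, b :: r, q')
| tm_left_edge a r q q' b :
    @delta M q a = Some (q', b, MLeft) -> tm_step ([::], a, r, q) ([::], @blank M, b :: r, q')
| tm_right s a c r' q q' b :
    @delta M q a = Some (q', b, MRight) -> tm_step (s, a, c :: r', q) (rcons s b, c, r', q')
| tm_right_edge s a q q' b :
    @delta M q a = Some (q', b, MRight) -> tm_step (s, a, [::], q) (rcons s b, @blank M, [::], q').

Inductive tm_steps (M : TM) : nat -> config M -> config M -> Prop :=
| tm_refl C : tm_steps 0 C C
| tm_cons n C C' D : tm_step C C' -> tm_steps n C' D -> tm_steps n.+1 C D.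

(* <(s,a,r,q)> = \x. x <s^R> <a> <r> <q> *)
Definition enc_config (M : TM) (C : config M) : value :=
  let: (s, a, r, q) := C in
  let N := (nsym M).+1 in
  Lam (App (App (App (App (Val (Var 0))
        (scott_str N (map (@nat_of_ord _) (rev s))))
        (scott_char N a))
        (scott_str N (map (@nat_of_ord _) r)))
        (scott_char (nst M) q)).

(* Main.v *)
Require Import Defs.
From mathcomp Require Import all_boot zify.
From Stdlib Require Import IndefiniteDescription.
Set Implicit Arguments. Unset Strict Implicit. Unset Printing Implicit Defensive.

Scheme term_ind2 := Induction for term Sort Prop
with value_ind2 := Induction for value Sort Prop.
Combined Scheme tv_ind from term_ind2, value_ind2.

Fixpoint inst_t (s : seq value) (d : nat) (t : term) : term :=
  match t with
  | Val v => Val (inst_v s d v)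
  | App t v => App (inst_t s d t) (inst_v s d v)
  end
with inst_v (s : seq value) (d : nat) (v : value) : value :=
  match v with
  | Var n => if n < d then Var n else if n - d < size s then nth (Var 0) s (n - d) else Var (n - size s)
  | Lam t => Lam (inst_t s d.+1 t)
  end.

Lemma closed_gen :
  (forall t j k, closed_t j t -> j <= k ->
     lift_t k t = t /\ (forall s, subst_t k s t = t) /\ (forall sg, inst_t sg k t = t)) /\
  (forall v j k, closed_v j v -> j <= k ->
     lift_v k v = v /\ (forall s, subst_v k s v = v) /\ (forall sg, inst_v sg k v = v)).
Proof.
apply: tv_ind => /=.
- move=> v IH j k Hc Hjk; have [h1 [h2 h3]] := IH j k Hc Hjk.
  by rewrite h1; split=> //; split=> ? ; rewrite ?h2 ?h3.
- move=> t IHt v IHv j k /andP[Ht Hv] Hjk.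
  have [a1 [a2 a3]] := IHt j k Ht Hjk; have [b1 [b2 b3]] := IHv j k Hv Hjk.
  by rewrite a1 b1; split=> //; split=> ?; rewrite ?a2 ?b2 ?a3 ?b3.
- move=> n j k Hn Hjk; have -> : n < k by lia.
  by split=> //; split.
- move=> t IH j k Hc Hjk; have [a1 [a2 a3]] := IH j.+1 k.+1 Hc Hjk.
  by rewrite a1; split=> //; split=> ?; rewrite ?a2 ?a3.
Qed.

Lemma lift_closed_v v k : closed_v 0 v -> lift_v k v = v.
Proof. by move=> H; case: (proj2 closed_gen v 0 k H (leq0n _)). Qed.
Lemma inst_closed_v v sg k : closed_v 0 v -> inst_v sg k v = v.
Proof. by move=> H; case: (proj2 closed_gen v 0 k H (leq0n _)) => _ [_ ->]. Qed.
Lemma inst_closed_t t sg k : closed_t 0 t -> inst_t sg k t = t.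
Proof. by move=> H; case: (proj1 closed_gen t 0 k H (leq0n _)) => _ [_ ->]. Qed.
Lemma subst_closed_v v s k : closed_v 0 v -> subst_v k s v = v.
Proof. by move=> H; case: (proj2 closed_gen v 0 k H (leq0n _)) => _ [-> _]. Qed.

Lemma subst_lift_gen :
  (forall t k s, subst_t k s (lift_t k t) = t) /\
  (forall v k s, subst_v k s (lift_v k v) = v).
Proof.
apply: tv_ind => /=.
- by move=> v IH k s; rewrite IH.
- by move=> t IHt v IHv k s; rewrite IHt IHv.
- move=> n k s; case: ifP => /= H; first by rewrite H.
  have -> : (n.+1 < k) = false by lia.
  have -> : (n.+1 == k) = false by lia.
  by [].
- by move=> t IH k s; rewrite IH.
Qed.

Lemma subst_inst s : closed_v 0 s ->
  (forall t d, subst_t d s t = inst_t [:: s] d t) /\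
  (forall v d, subst_v d s v = inst_v [:: s] d v).
Proof.
move=> Hs; apply: tv_ind => /=.
- by move=> v IH d; rewrite IH.
- by move=> t IHt v IHv d; rewrite IHt IHv.
- move=> n d; case: ltnP => H //.
  case: eqP => [->|Hne]; first by rewrite subnn.
  have -> : (n - d < 1) = false by lia.
  by congr Var; lia.
- by move=> t IH d; rewrite lift_closed_v // IH.
Qed.

Lemma inst_comp sg : all (closed_v 0) sg ->
  (forall t d tau, inst_t tau d (inst_t sg (d + size tau) t) = inst_t (tau ++ sg) d t) /\
  (forall v d tau, inst_v tau d (inst_v sg (d + size tau) v) = inst_v (tau ++ sg) d v).
Proof.
move=> Hsg; apply: tv_ind => /=.
- by move=> v IH d tau; rewrite IH.
- by move=> t IHt v IHv d tau; rewrite IHt IHv.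
- move=> n d tau; rewrite size_cat.
  case: (ltnP n d) => H1.
  + have -> : n < d + size tau by lia.
    by rewrite /= H1.
  case: (ltnP n (d + size tau)) => H2.
  + rewrite /= ltnNge H1 /=.
    have -> : n - d < size tau by lia.
    have -> : n - d < size tau + size sg by lia.
    by rewrite nth_cat; have -> : n - d < size tau by lia.
  case: (ltnP (n - (d + size tau)) (size sg)) => H3.
  + rewrite inst_closed_v; last first.
      by apply: (all_nthP (Var 0) Hsg).
    have -> : n - d < size tau + size sg by lia.
    rewrite nth_cat; have -> : (n - d < size tau) = false by lia.
    congr nth; lia.
  + rewrite /=.
    have -> : (n - size sg < d) = false by lia.
    have -> : (n - size sg - d < size tau) = false by lia.
    have -> : (n - d < size tau + size sg) = false by lia.
    congr Var; lia.
- move=> t IH d tau; by rewrite -IH addSn.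
Qed.

Lemma inst_nil :
  (forall t d, inst_t [::] d t = t) /\ (forall v d, inst_v [::] d v = v).
Proof.
apply: tv_ind => /=.
- by move=> v IH d; rewrite IH.
- by move=> t IHt v IHv d; rewrite IHt IHv.
- by move=> n d; case: ifP => //; rewrite subn0.
- by move=> t IH d; rewrite IH.
Qed.

Definition apps (t : term) (vs : seq value) : term := foldl App t vs.

Lemma inst_nlam sg d p t : inst_t sg d (nlam p t) = nlam p (inst_t sg (d + p) t).
Proof.
elim: p d => [|p IH] d /=; first by rewrite addn0.
by rewrite IH addSnnS.
Qed.

Lemma inst_apps sg d t vs : inst_t sg d (apps t vs) = apps (inst_t sg d t) (map (inst_v sg d) vs).
Proof. by elim: vs t => [|v vs IH] t //=; rewrite IH. Qed.

Lemma apps_cat t vs us : apps t (vs ++ us) = apps (apps t vs) us.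
Proof. by rewrite /apps foldl_cat. Qed.

Lemma closed_nlam j p t : closed_t j (nlam p t) = closed_t (j + p) t.
Proof. by elim: p j => [|p IH] j /=; rewrite ?addn0 // IH addSnnS. Qed.

Lemma closed_apps j t vs : closed_t j (apps t vs) = closed_t j t && all (closed_v j) vs.
Proof. elim: vs t => [|v vs IH] t /=; first by rewrite andbT. by rewrite IH /= andbA. Qed.

Lemma det_steps_trans a b t u w : det_steps a t u -> det_steps b u w -> det_steps (a + b) t w.
Proof. elim=> [//|n t1 t2 t3 H1 H2 IH] H3 /=. rewrite addSn. apply: det_cons H1 (IH H3). Qed.

Lemma det_step_apps t u vs : det_step t u -> det_step (apps t vs) (apps u vs).
Proof. elim: vs t u => [|v vs IH] t u H //=. apply: IH. exact: det_ctx. Qed.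

Lemma det_steps_apps n t u vs : det_steps n t u -> det_steps n (apps t vs) (apps u vs).
Proof. elim=> [t'|n' t1 t2 t3 H1 H2 IH]; first exact: det_refl. apply: det_cons (det_step_apps _ H1) IH. Qed.

Lemma det_steps_app n t u v : det_steps n t u -> det_steps n (App t v) (App u v).
Proof. exact: (@det_steps_apps n t u [:: v]). Qed.

Lemma beta_many vs body : all (closed_v 0) vs ->
  det_steps (size vs) (apps (nlam (size vs) body) vs) (inst_t (rev vs) 0 body).
Proof.
elim: vs body => [|v vs IH] body /=.
  move=> _; rewrite /apps /=.
  rewrite (proj1 inst_nil); exact: det_refl.
move=> /andP[Hv Hvs].
apply: det_cons.
  apply: (@det_step_apps _ _ vs). exact: det_beta.
rewrite (proj1 (subst_inst Hv)) inst_nlam add0n.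
have := IH (inst_t [:: v] (size vs) body) Hvs.
have := proj1 (inst_comp (sg:=[::v]) _) body 0 (rev vs).
rewrite add0n size_rev /= Hv => E; rewrite E //.
by rewrite rev_cons cats1.
Qed.

Lemma map_inst_closed sg d vs : all (closed_v 0) vs -> map (inst_v sg d) vs = vs.
Proof. elim: vs => //= v vs IH /andP[H1 H2]. by rewrite inst_closed_v // IH. Qed.

Lemma closed_char_gen N i j : closed_v j (scott_char N i).
Proof. rewrite /scott_char /= closed_nlam /=. lia. Qed.
Lemma closed_char N i : closed_v 0 (scott_char N i).
Proof. exact: closed_char_gen. Qed.

Lemma closed_str_gen N w j : closed_v j (scott_str N w).
Proof.
elim: w j => [|i w IH] j /=; rewrite closed_nlam //=.
rewrite IH andbT. lia.
Qed.
Lemma closed_str N w : closed_v 0 (scott_str N w).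
Proof. exact: closed_str_gen. Qed.

Lemma sel_char N i vs us : i < N -> all (closed_v 0) vs -> size vs = N ->
  det_steps N (apps (Val (scott_char N i)) (vs ++ us)) (apps (Val (nth (Var 0) vs i)) us).
Proof.
move=> Hi Hc Hs; rewrite apps_cat; apply: det_steps_apps.
case: N Hi Hs => [//|N] Hi Hs.
have := beta_many (Val (Var (N - i))) Hc; rewrite Hs.
suff -> : inst_t (rev vs) 0 (Val (Var (N - i))) = Val (nth (Var 0) vs i) by [].
rewrite /= size_rev Hs.
have -> : N - i - 0 < N.+1 by lia.
rewrite subn0 nth_rev ?Hs; last by lia.
congr (Val (nth _ _ _)); lia.
Qed.

Lemma sel_str_cons N c w vs ln us : c < N -> all (closed_v 0) vs -> size vs = N -> closed_v 0 ln ->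
  det_steps N.+1 (apps (Val (scott_str N (c :: w))) (vs ++ ln :: us))
    (apps (Val (nth (Var 0) vs c)) (scott_str N w :: us)).
Proof.
move=> Hi Hc Hs Hl.
have -> : vs ++ ln :: us = (vs ++ [:: ln]) ++ us by rewrite -catA.
rewrite apps_cat; apply: (@det_steps_apps _ _ _ us).
have Hc' : all (closed_v 0) (vs ++ [:: ln]) by rewrite all_cat Hc /= Hl.
have := beta_many (App (Val (Var (N - c))) (scott_str N w)) Hc'.
rewrite size_cat Hs addn1.
suff -> : inst_t (rev (vs ++ [:: ln])) 0 (App (Val (Var (N - c))) (scott_str N w)) =
   App (Val (nth (Var 0) vs c)) (scott_str N w) by [].
rewrite /= inst_closed_v ?closed_str // size_rev size_cat Hs addn1.
have -> : N - c - 0 < N.+1 by lia.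
rewrite subn0 cats1 rev_rcons.
case E: (N - c) => [|k]; first by lia.
rewrite /= nth_rev ?Hs; last by lia.
congr (App (Val (nth _ _ _)) _); lia.
Qed.

Lemma sel_str_nil N vs ln us : all (closed_v 0) vs -> size vs = N -> closed_v 0 ln ->
  det_steps N.+1 (apps (Val (scott_str N [::])) (vs ++ ln :: us)) (apps (Val ln) us).
Proof.
move=> Hc Hs Hl.
have -> : vs ++ ln :: us = (vs ++ [:: ln]) ++ us by rewrite -catA.
rewrite apps_cat; apply: (@det_steps_apps _ _ _ us).
have Hc' : all (closed_v 0) (vs ++ [:: ln]) by rewrite all_cat Hc /= Hl.
have := beta_many (Val (Var 0)) Hc'.
rewrite size_cat Hs addn1.
suff -> : inst_t (rev (vs ++ [:: ln])) 0 (Val (Var 0)) = Val ln by [].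
by rewrite /= size_rev size_cat addn1 cats1 rev_rcons.
Qed.

Definition lamv p body := Lam (nlam p body).
Definition cfgv S A R Q := Lam (apps (Val (Var 0)) [:: S; A; R; Q]).
Definition consv N (b : nat) x := Lam (nlam N (App (Val (Var (N - b))) x)).
Definition selfcall (cv : value) (wi : nat) := App (App (Val (Var wi)) (Var wi)) cv.

Lemma beta_lamv p body vs us : all (closed_v 0) vs -> size vs = p.+1 ->
  det_steps p.+1 (apps (Val (lamv p body)) (vs ++ us)) (apps (inst_t (rev vs) 0 body) us).
Proof.
move=> Hc Hs; rewrite apps_cat; apply: det_steps_apps.
have := beta_many body Hc; by rewrite Hs.
Qed.

Lemma inst_consv sg d N b : 0 < size sg ->
  inst_v sg d (consv N b (Var (N + d).+1)) = consv N b (nth (Var 0) sg 0).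
Proof.
move=> Hs; rewrite /consv /= inst_nlam /=.
have -> : N - b < d.+1 + N by lia.
have -> : ((N + d).+1 < d.+1 + N) = false by lia.
have -> : (N + d).+1 - (d.+1 + N) = 0 by lia.
by rewrite Hs.
Qed.

Unset Implicit Arguments.
Lemma closed_mono :
  (forall t j k, closed_t j t -> j <= k -> closed_t k t) /\
  (forall v j k, closed_v j v -> j <= k -> closed_v k v).
Proof.
apply: tv_ind => /=.
- by move=> v IH j k; apply: IH.
- by move=> t IHt v IHv j k /andP[H1 H2] H; rewrite (IHt j) // (IHv j).
- move=> n j k H1 H2; lia.
- by move=> t IH j k H1 H2; apply: (IH j.+1).
Qed.
Lemma closed0 v k : closed_v 0 v -> closed_v k v.
Proof. move=> H; exact: (proj2 closed_mono v 0). Qed.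

Definition NS (M : TM) := (nsym M).+1.

Definition Lc (M : TM) (q' : nat) (b : nat) (c : nat) : value :=
  lamv 2 (selfcall (cfgv (Var 3) (scott_char (NS M) c) (consv (NS M) b (Var (NS M).+2))
                         (scott_char (nst M) q')) 1).
Definition Lnil (M : TM) (q' : nat) (b : nat) : value :=
  lamv 1 (selfcall (cfgv (scott_str (NS M) [::]) (scott_char (NS M) (nsym M))
                         (consv (NS M) b (Var (NS M).+2)) (scott_char (nst M) q')) 1).
Definition Rc (M : TM) (q' : nat) (b : nat) (c : nat) : value :=
  lamv 2 (selfcall (cfgv (consv (NS M) b (Var (NS M).+2)) (scott_char (NS M) c) (Var 3)
                         (scott_char (nst M) q')) 1).
Definition Rnil (M : TM) (q' : nat) (b : nat) : value :=
  lamv 1 (selfcall (cfgv (consv (NS M) b (Var (NS M).+2)) (scott_char (NS M) (nsym M))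
                         (scott_str (NS M) [::]) (scott_char (nst M) q')) 1).
Definition Ls M q' b := mkseq (Lc M q' b) (NS M).
Definition Rs M q' b := mkseq (Rc M q' b) (NS M).

Definition Ufin (M : TM) (q a : nat) : value :=
  lamv 2 (Val (Lam (App (Val (Var 0)) (cfgv (Var 3) (scott_char (NS M) a) (Var 2) (scott_char (nst M) q))))).
Definition Ustay (M : TM) (q' b : nat) : value :=
  lamv 2 (selfcall (cfgv (Var 2) (scott_char (NS M) b) (Var 1) (scott_char (nst M) q')) 2).
Definition Uleft (M : TM) (q' b : nat) : value :=
  lamv 2 (apps (Val (Var 1)) (Ls M q' b ++ [:: Lnil M q' b; Var 2; Var 0])).
Definition Uright (M : TM) (q' b : nat) : value :=
  lamv 2 (apps (Val (Var 0)) (Rs M q' b ++ [:: Rnil M q' b; Var 2; Var 1])).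

Definition U (M : TM) (q : 'I_(nst M)) (a : 'I_(nsym M).+1) : value :=
  match @delta M q a with
  | None => Ufin M q a
  | Some (q', b, MStay) => Ustay M q' b
  | Some (q', b, MLeft) => Uleft M q' b
  | Some (q', b, MRight) => Uright M q' b
  end.
Definition Us M q := map (U M q) (enum 'I_(nsym M).+1).
Definition T (M : TM) (q : 'I_(nst M)) : value :=
  lamv 3 (apps (Val (Var 1)) (Us M q ++ [:: Var 3; Var 2; Var 0])).
Definition Ts M := map (T M) (enum 'I_(nst M)).
Definition P (M : TM) : value :=
  lamv 4 (apps (Val (Var 1)) (Ts M ++ [:: Var 0; Var 4; Var 3; Var 2])).
Definition W (M : TM) : value := lamv 1 (App (App (Val (Var 0)) (P M)) (Var 1)).
Definition loop M := App (Val (W M)) (W M).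
Definition trans M := nlam 2 (App (App (loop M) (Var 0)) (Var 1)).

Arguments Lc : simpl never. Arguments Lnil : simpl never. Arguments Rc : simpl never.
Arguments Rnil : simpl never. Arguments Ls : simpl never. Arguments Rs : simpl never.
Arguments Ufin : simpl never. Arguments Ustay : simpl never. Arguments Uleft : simpl never.
Arguments Uright : simpl never. Arguments U : simpl never. Arguments Us : simpl never.
Arguments T : simpl never. Arguments Ts : simpl never. Arguments P : simpl never.
Arguments W : simpl never. Arguments scott_char : simpl never. Arguments scott_str : simpl never.
Arguments consv : simpl never. Arguments cfgv : simpl never.

Lemma all_closed0 vs k : all (closed_v 0) vs -> all (closed_v k) vs.
Proof. elim: vs => //= v vs IH /andP[H1 H2]; by rewrite closed0 ?IH. Qed.

Lemma closed_cfgv j S A R Q : closed_v j (cfgv S A R Q) = [&& closed_v j.+1 S, closed_v j.+1 A, closed_v j.+1 R & closed_v j.+1 Q].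
Proof. by rewrite /cfgv /= !andbA. Qed.

Lemma closed_consv j N b x : closed_v (j + N).+1 x -> closed_v j (consv N b x).
Proof. move=> H; rewrite /consv /= closed_nlam /= addSn H andbT. lia. Qed.

Ltac clos := rewrite /= ?closed_nlam /= ?closed_apps /= ?closed_cfgv ?closed_char_gen ?closed_str_gen /=.

Lemma closed_Lc M q b c : closed_v 0 (Lc M q b c).
Proof. rewrite /Lc /lamv; clos; rewrite /NS; lia. Qed.
Lemma closed_Lnil M q b : closed_v 0 (Lnil M q b).
Proof. rewrite /Lnil /lamv; clos; rewrite /NS; lia. Qed.
Lemma closed_Rc M q b c : closed_v 0 (Rc M q b c).
Proof. rewrite /Rc /lamv; clos; rewrite /NS; lia. Qed.
Lemma closed_Rnil M q b : closed_v 0 (Rnil M q b).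
Proof. rewrite /Rnil /lamv; clos; rewrite /NS; lia. Qed.
Lemma closed_Ls M q b : all (closed_v 0) (Ls M q b).
Proof. by rewrite /Ls /mkseq all_map; apply/allP => i _; exact: closed_Lc. Qed.
Lemma closed_Rs M q b : all (closed_v 0) (Rs M q b).
Proof. by rewrite /Rs /mkseq all_map; apply/allP => i _; exact: closed_Rc. Qed.
Lemma size_Ls M q b : size (Ls M q b) = NS M. Proof. exact: size_mkseq. Qed.
Lemma size_Rs M q b : size (Rs M q b) = NS M. Proof. exact: size_mkseq. Qed.

Opaque Ls Rs Lc Lnil Rc Rnil.
Lemma closed_U M q a : closed_v 0 (U M q a).
Proof.
rewrite /U; case: (delta q a) => [[[q' b] []]|].
- rewrite /Uleft /lamv; clos; by rewrite all_cat all_closed0 ?closed_Ls //= closed0 ?closed_Lnil.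
- rewrite /Uright /lamv; clos; by rewrite all_cat all_closed0 ?closed_Rs //= closed0 ?closed_Rnil.
- rewrite /Ustay /lamv; clos; rewrite /NS; lia.
- rewrite /Ufin /lamv; clos; rewrite /NS; lia.
Qed.
Opaque U.
Lemma closed_Us M q : all (closed_v 0) (Us M q).
Proof. by rewrite /Us all_map; apply/allP => i _; exact: closed_U. Qed.
Opaque Us.
Lemma closed_T M q : closed_v 0 (T M q).
Proof. rewrite /T /lamv; clos; by rewrite all_cat all_closed0 ?closed_Us. Qed.
Opaque T.
Lemma closed_Ts M : all (closed_v 0) (Ts M).
Proof. by rewrite /Ts all_map; apply/allP => i _; exact: closed_T. Qed.
Opaque Ts.
Lemma closed_P M : closed_v 0 (P M).
Proof. rewrite /P /lamv; clos; by rewrite all_cat all_closed0 ?closed_Ts. Qed.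
Opaque P.
Lemma closed_W M : closed_v 0 (W M).
Proof. rewrite /W /lamv; clos. by rewrite closed0 ?closed_P. Qed.

Lemma W_def M : W M = lamv 1 (App (App (Val (Var 0)) (P M)) (Var 1)). Proof. by []. Qed.
Lemma P_def M : P M = lamv 4 (apps (Val (Var 1)) (Ts M ++ [:: Var 0; Var 4; Var 3; Var 2])).
Proof. by []. Qed.
Lemma T_def M q : T M q = lamv 3 (apps (Val (Var 1)) (Us M q ++ [:: Var 3; Var 2; Var 0])).
Proof. by []. Qed.
Lemma cfgv_def S A R Q : cfgv S A R Q = lamv 0 (apps (Val (Var 0)) [:: S; A; R; Q]).
Proof. by []. Qed.
Lemma inst_cfgv sg d S A R Q : inst_v sg d (cfgv S A R Q) =
  cfgv (inst_v sg d.+1 S) (inst_v sg d.+1 A) (inst_v sg d.+1 R) (inst_v sg d.+1 Q).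
Proof. by []. Qed.
Lemma Lc_def M q' b c : Lc M q' b c = lamv 2 (selfcall (cfgv (Var 3) (scott_char (NS M) c) (consv (NS M) b (Var (NS M).+2))
                         (scott_char (nst M) q')) 1).
Proof. by []. Qed.
Lemma Lnil_def M q' b : Lnil M q' b = lamv 1 (selfcall (cfgv (scott_str (NS M) [::]) (scott_char (NS M) (nsym M))
                         (consv (NS M) b (Var (NS M).+2)) (scott_char (nst M) q')) 1).
Proof. by []. Qed.
Lemma Rc_def M q' b c : Rc M q' b c = lamv 2 (selfcall (cfgv (consv (NS M) b (Var (NS M).+2)) (scott_char (NS M) c) (Var 3)
                         (scott_char (nst M) q')) 1).
Proof. by []. Qed.
Lemma Rnil_def M q' b : Rnil M q' b = lamv 1 (selfcall (cfgv (consv (NS M) b (Var (NS M).+2)) (scott_char (NS M) (nsym M))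
                         (scott_str (NS M) [::]) (scott_char (nst M) q')) 1).
Proof. by []. Qed.
Lemma nth_Ls M q' b c : c < NS M -> nth (Var 0) (Ls M q' b) c = Lc M q' b c.
Proof. Transparent Ls. move=> H; by rewrite /Ls nth_mkseq. Qed.
Lemma nth_Rs M q' b c : c < NS M -> nth (Var 0) (Rs M q' b) c = Rc M q' b c.
Proof. Transparent Rs. move=> H; by rewrite /Rs nth_mkseq. Qed.
Opaque W cfgv consv Ls Rs Lc Rc Lnil Rnil scott_char scott_str.


Lemma ds_conv {n t t' u u'} : det_steps n t' u' -> t = t' -> u' = u -> det_steps n t u.
Proof. by move=> H -> <-. Qed.
Lemma det_steps_eq n n' t u : n = n' -> det_steps n t u -> det_steps n' t u.
Proof. by move=> ->. Qed.

Lemma enc_cfgv M s a r q : @enc_config M (s, a, r, q) =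
  cfgv (scott_str (NS M) (map val (rev s))) (scott_char (NS M) a)
       (scott_str (NS M) (map val r)) (scott_char (nst M) q) :> value.
Proof. Transparent cfgv scott_char scott_str. by []. Opaque cfgv scott_char scott_str. Qed.

Lemma closed_cfg S A R Q : closed_v 0 S -> closed_v 0 A -> closed_v 0 R -> closed_v 0 Q ->
  closed_v 0 (cfgv S A R Q).
Proof. move=> *; rewrite closed_cfgv; apply/and4P; split; exact: closed0. Qed.

Lemma nth_Ts M (q : 'I_(nst M)) : nth (Var 0) (Ts M) q = T M q.
Proof. Transparent Ts. rewrite /Ts (nth_map q) ?size_enum_ord // nth_ord_enum //. Opaque Ts. Qed.
Lemma size_Ts M : size (Ts M) = nst M.
Proof. Transparent Ts. by rewrite /Ts size_map size_enum_ord. Opaque Ts. Qed.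
Lemma nth_Us M q (a : 'I_(nsym M).+1) : nth (Var 0) (Us M q) a = U M q a.
Proof. Transparent Us. rewrite /Us (nth_map a) ?size_enum_ord // nth_ord_enum //. Opaque Us. Qed.
Lemma size_Us M q : size (Us M q) = NS M.
Proof. Transparent Us. by rewrite /Us size_map size_enum_ord. Opaque Us. Qed.

#[export] Hint Resolve closed_P closed_W closed_char closed_str closed_Lc closed_Lnil closed_Rc closed_Rnil
  closed_U closed_T closed_Ts closed_Us closed_Ls closed_Rs : core.

Definition K0 M := 12 + nst M + NS M.

Lemma prefix M S A R Q (q : 'I_(nst M)) (a : 'I_(nsym M).+1) :
  closed_v 0 S -> closed_v 0 R ->
  A = scott_char (NS M) a -> Q = scott_char (nst M) q ->
  det_steps (K0 M) (App (loop M) (cfgv S A R Q)) (apps (Val (U M q a)) [:: W M; S; R]).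
Proof.
move=> HS HR HAe HQe.
have HA : closed_v 0 A by rewrite HAe closed_char.
have HQ : closed_v 0 Q by rewrite HQe closed_char.
have HC : closed_v 0 (cfgv S A R Q) by apply: closed_cfg.
have E1 : det_steps 2 (App (loop M) (cfgv S A R Q)) (apps (Val (cfgv S A R Q)) [:: P M; W M]).
  apply: (ds_conv (@beta_lamv 1 (App (App (Val (Var 0)) (P M)) (Var 1)) [:: W M; cfgv S A R Q] [::] ltac:(by rewrite /= HC closed_W) erefl)).
  - by rewrite /loop {1}W_def.
  - by rewrite /= !inst_closed_v.
have E2 : det_steps 1 (apps (Val (cfgv S A R Q)) [:: P M; W M]) (apps (Val (P M)) [:: S; A; R; Q; W M]).
  apply: (ds_conv (@beta_lamv 0 (apps (Val (Var 0)) [:: S; A; R; Q]) [:: P M] [:: W M] ltac:(by rewrite /= closed_P) erefl)).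
  - by rewrite {1}cfgv_def.
  - by rewrite /= !inst_closed_v.
have E3 : det_steps 5 (apps (Val (P M)) [:: S; A; R; Q; W M]) (apps (Val Q) (Ts M ++ [:: W M; S; A; R])).
  apply: (ds_conv (@beta_lamv 4 (apps (Val (Var 1)) (Ts M ++ [:: Var 0; Var 4; Var 3; Var 2])) [:: S; A; R; Q; W M] [::] ltac:(by rewrite /= HS HA HR HQ closed_W) erefl)).
  - by rewrite {1}P_def.
  - by rewrite /= inst_apps map_cat map_inst_closed.
have E4 : det_steps (nst M) (apps (Val Q) (Ts M ++ [:: W M; S; A; R])) (apps (Val (T M q)) [:: W M; S; A; R]).
  rewrite HQe -nth_Ts; apply: sel_char; rewrite ?closed_Ts ?size_Ts //.
have E5 : det_steps 4 (apps (Val (T M q)) [:: W M; S; A; R]) (apps (Val A) (Us M q ++ [:: W M; S; R])).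
  apply: (ds_conv (@beta_lamv 3 (apps (Val (Var 1)) (Us M q ++ [:: Var 3; Var 2; Var 0])) [:: W M; S; A; R] [::] ltac:(by rewrite /= HS HA HR closed_W) erefl)).
  - by rewrite {1}T_def.
  - by rewrite /= inst_apps map_cat map_inst_closed.
have E6 : det_steps (NS M) (apps (Val A) (Us M q ++ [:: W M; S; R])) (apps (Val (U M q a)) [:: W M; S; R]).
  rewrite HAe -nth_Us; apply: sel_char; rewrite ?closed_Us ?size_Us //.
apply: det_steps_eq (det_steps_trans E1 (det_steps_trans E2 (det_steps_trans E3
   (det_steps_trans E4 (det_steps_trans E5 E6))))).
rewrite /K0; lia.
Qed.

Lemma U_eq M q a : U M q a =
  match @delta M q a with
  | None => Ufin M q a
  | Some (q', b, MStay) => Ustay M q' b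
  | Some (q', b, MLeft) => Uleft M q' b
  | Some (q', b, MRight) => Uright M q' b
  end.
Proof. Transparent U. by []. Opaque U. Qed.

Lemma consv_str N b w : consv N b (scott_str N w) = scott_str N (b :: w).
Proof. Transparent consv scott_str. by []. Opaque consv scott_str. Qed.

Lemma inst_consv1 sg N b : 0 < size sg ->
  inst_v sg 1 (consv N b (Var N.+2)) = consv N b (nth (Var 0) sg 0).
Proof. move=> H; rewrite -(inst_consv 1 N b H) addn1 //. Qed.

Lemma act_fin M q a S R : closed_v 0 S -> closed_v 0 R ->
  det_steps 3 (apps (Val (Ufin M q a)) [:: W M; S; R])
    (Val (Lam (App (Val (Var 0)) (cfgv S (scott_char (NS M) a) R (scott_char (nst M) q))))).
Proof.
move=> HS HR.
apply: (ds_conv (@beta_lamv 2 (Val (Lam (App (Val (Var 0)) (cfgv (Var 3) (scott_char (NS M) a) (Var 2) (scott_char (nst M) q)))))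
  [:: W M; S; R] [::] ltac:(by rewrite /= HS HR closed_W) erefl)).
- by [].
- by rewrite /= inst_cfgv /= !inst_closed_v.
Qed.

Lemma act_stay M q' b S R : closed_v 0 S -> closed_v 0 R ->
  det_steps 3 (apps (Val (Ustay M q' b)) [:: W M; S; R])
    (App (loop M) (cfgv S (scott_char (NS M) b) R (scott_char (nst M) q'))).
Proof.
move=> HS HR.
apply: (ds_conv (@beta_lamv 2 (selfcall (cfgv (Var 2) (scott_char (NS M) b) (Var 1) (scott_char (nst M) q')) 2)
  [:: W M; S; R] [::] ltac:(by rewrite /= HS HR closed_W) erefl)).
- by [].
- by rewrite /= inst_cfgv /= !inst_closed_v.
Qed.

Lemma act_left_cons M q' b S' c R : closed_v 0 R -> c < NS M ->
  det_steps (7 + NS M) (apps (Val (Uleft M q' b)) [:: W M; scott_str (NS M) (c :: S'); R])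
    (App (loop M) (cfgv (scott_str (NS M) S') (scott_char (NS M) c) (consv (NS M) b R) (scott_char (nst M) q'))).
Proof.
move=> HR Hc.
have E1 : det_steps 3 (apps (Val (Uleft M q' b)) [:: W M; scott_str (NS M) (c :: S'); R])
   (apps (Val (scott_str (NS M) (c :: S'))) (Ls M q' b ++ [:: Lnil M q' b; W M; R])).
  apply: (ds_conv (@beta_lamv 2 (apps (Val (Var 1)) (Ls M q' b ++ [:: Lnil M q' b; Var 2; Var 0]))
    [:: W M; scott_str (NS M) (c :: S'); R] [::] ltac:(by rewrite /= HR closed_W closed_str) erefl)).
  - by [].
  - by rewrite /= inst_apps map_cat map_inst_closed //= inst_closed_v.
have E2 := @sel_str_cons (NS M) c S' (Ls M q' b) (Lnil M q' b) [:: W M; R] Hc (closed_Ls _ _ _) (size_Ls _ _ _) (closed_Lnil _ _ _).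
rewrite nth_Ls // in E2.
have E3 : det_steps 3 (apps (Val (Lc M q' b c)) [:: scott_str (NS M) S'; W M; R])
   (App (loop M) (cfgv (scott_str (NS M) S') (scott_char (NS M) c) (consv (NS M) b R) (scott_char (nst M) q'))).
  apply: (ds_conv (@beta_lamv 2 (selfcall (cfgv (Var 3) (scott_char (NS M) c) (consv (NS M) b (Var (NS M).+2))
                         (scott_char (nst M) q')) 1)
    [:: scott_str (NS M) S'; W M; R] [::] ltac:(by rewrite /= HR closed_W closed_str) erefl)).
  - by rewrite {1}Lc_def.
  - by rewrite /= inst_cfgv /= inst_consv1 //= !inst_closed_v.
apply: det_steps_eq (det_steps_trans E1 (det_steps_trans E2 E3)); lia.
Qed.

Lemma act_left_nil M q' b R : closed_v 0 R ->
  det_steps (6 + NS M) (apps (Val (Uleft M q' b)) [:: W M; scott_str (NS M) [::]; R])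
    (App (loop M) (cfgv (scott_str (NS M) [::]) (scott_char (NS M) (nsym M)) (consv (NS M) b R) (scott_char (nst M) q'))).
Proof.
move=> HR.
have E1 : det_steps 3 (apps (Val (Uleft M q' b)) [:: W M; scott_str (NS M) [::]; R])
   (apps (Val (scott_str (NS M) [::])) (Ls M q' b ++ [:: Lnil M q' b; W M; R])).
  apply: (ds_conv (@beta_lamv 2 (apps (Val (Var 1)) (Ls M q' b ++ [:: Lnil M q' b; Var 2; Var 0]))
    [:: W M; scott_str (NS M) [::]; R] [::] ltac:(by rewrite /= HR closed_W closed_str) erefl)).
  - by [].
  - by rewrite /= inst_apps map_cat map_inst_closed //= inst_closed_v.
have E2 := @sel_str_nil (NS M) (Ls M q' b) (Lnil M q' b) [:: W M; R] (closed_Ls _ _ _) (size_Ls _ _ _) (closed_Lnil _ _ _).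
have E3 : det_steps 2 (apps (Val (Lnil M q' b)) [:: W M; R])
   (App (loop M) (cfgv (scott_str (NS M) [::]) (scott_char (NS M) (nsym M)) (consv (NS M) b R) (scott_char (nst M) q'))).
  apply: (ds_conv (@beta_lamv 1 (selfcall (cfgv (scott_str (NS M) [::]) (scott_char (NS M) (nsym M))
                         (consv (NS M) b (Var (NS M).+2)) (scott_char (nst M) q')) 1)
    [:: W M; R] [::] ltac:(by rewrite /= HR closed_W) erefl)).
  - by rewrite {1}Lnil_def.
  - by rewrite /= inst_cfgv /= inst_consv1 //= !inst_closed_v.
apply: det_steps_eq (det_steps_trans E1 (det_steps_trans E2 E3)); lia.
Qed.

Lemma act_right_cons M q' b S c R' : closed_v 0 S -> c < NS M ->
  det_steps (7 + NS M) (apps (Val (Uright M q' b)) [:: W M; S; scott_str (NS M) (c :: R')])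
    (App (loop M) (cfgv (consv (NS M) b S) (scott_char (NS M) c) (scott_str (NS M) R') (scott_char (nst M) q'))).
Proof.
move=> HS Hc.
have E1 : det_steps 3 (apps (Val (Uright M q' b)) [:: W M; S; scott_str (NS M) (c :: R')])
   (apps (Val (scott_str (NS M) (c :: R'))) (Rs M q' b ++ [:: Rnil M q' b; W M; S])).
  apply: (ds_conv (@beta_lamv 2 (apps (Val (Var 0)) (Rs M q' b ++ [:: Rnil M q' b; Var 2; Var 1]))
    [:: W M; S; scott_str (NS M) (c :: R')] [::] ltac:(by rewrite /= HS closed_W closed_str) erefl)).
  - by [].
  - by rewrite /= inst_apps map_cat map_inst_closed //= inst_closed_v.
have E2 := @sel_str_cons (NS M) c R' (Rs M q' b) (Rnil M q' b) [:: W M; S] Hc (closed_Rs _ _ _) (size_Rs _ _ _) (closed_Rnil _ _ _).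
rewrite nth_Rs // in E2.
have E3 : det_steps 3 (apps (Val (Rc M q' b c)) [:: scott_str (NS M) R'; W M; S])
   (App (loop M) (cfgv (consv (NS M) b S) (scott_char (NS M) c) (scott_str (NS M) R') (scott_char (nst M) q'))).
  apply: (ds_conv (@beta_lamv 2 (selfcall (cfgv (consv (NS M) b (Var (NS M).+2)) (scott_char (NS M) c) (Var 3)
                         (scott_char (nst M) q')) 1)
    [:: scott_str (NS M) R'; W M; S] [::] ltac:(by rewrite /= HS closed_W closed_str) erefl)).
  - by rewrite {1}Rc_def.
  - by rewrite /= inst_cfgv /= inst_consv1 //= !inst_closed_v.
apply: det_steps_eq (det_steps_trans E1 (det_steps_trans E2 E3)); lia.
Qed.

Lemma act_right_nil M q' b S : closed_v 0 S ->
  det_steps (6 + NS M) (apps (Val (Uright M q' b)) [:: W M; S; scott_str (NS M) [::]])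
    (App (loop M) (cfgv (consv (NS M) b S) (scott_char (NS M) (nsym M)) (scott_str (NS M) [::]) (scott_char (nst M) q'))).
Proof.
move=> HS.
have E1 : det_steps 3 (apps (Val (Uright M q' b)) [:: W M; S; scott_str (NS M) [::]])
   (apps (Val (scott_str (NS M) [::])) (Rs M q' b ++ [:: Rnil M q' b; W M; S])).
  apply: (ds_conv (@beta_lamv 2 (apps (Val (Var 0)) (Rs M q' b ++ [:: Rnil M q' b; Var 2; Var 1]))
    [:: W M; S; scott_str (NS M) [::]] [::] ltac:(by rewrite /= HS closed_W closed_str) erefl)).
  - by [].
  - by rewrite /= inst_apps map_cat map_inst_closed //= inst_closed_v.
have E2 := @sel_str_nil (NS M) (Rs M q' b) (Rnil M q' b) [:: W M; S] (closed_Rs _ _ _) (size_Rs _ _ _) (closed_Rnil _ _ _).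
have E3 : det_steps 2 (apps (Val (Rnil M q' b)) [:: W M; S])
   (App (loop M) (cfgv (consv (NS M) b S) (scott_char (NS M) (nsym M)) (scott_str (NS M) [::]) (scott_char (nst M) q'))).
  apply: (ds_conv (@beta_lamv 1 (selfcall (cfgv (consv (NS M) b (Var (NS M).+2)) (scott_char (NS M) (nsym M))
                         (scott_str (NS M) [::]) (scott_char (nst M) q')) 1)
    [:: W M; S] [::] ltac:(by rewrite /= HS closed_W) erefl)).
  - by rewrite {1}Rnil_def.
  - by rewrite /= inst_cfgv /= inst_consv1 //= !inst_closed_v.
apply: det_steps_eq (det_steps_trans E1 (det_steps_trans E2 E3)); lia.
Qed.

Definition K M := K0 M + 7 + NS M.

Lemma str_rev_rcons N (s : seq nat) c : scott_str N (rev (rcons s c)) = scott_str N (c :: rev s).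
Proof. by rewrite rev_rcons. Qed.

Lemma sim_step M (C C' : config M) : tm_step C C' ->
  exists j, 0 < j <= K M /\ det_steps j (App (loop M) (enc_config C)) (App (loop M) (enc_config C')).
Proof.
case=> {C C'}.
- move=> s a r q q' b H.
  rewrite !enc_cfgv.
  have E1 := @prefix M (scott_str (NS M) (map val (rev s))) _ (scott_str (NS M) (map val (r))) _ q a (closed_str _ _) (closed_str _ _) erefl erefl.
  rewrite U_eq H in E1.
  have E2 := @act_stay M q' b _ _ (closed_str (NS M) (map val (rev s))) (closed_str (NS M) (map val r)).
  exists (K0 M + 3); split; first by rewrite /K; lia.
  exact: det_steps_trans E1 E2.
- move=> s' c a r q q' b H.
  rewrite !enc_cfgv.
  have E1 := @prefix M (scott_str (NS M) (map val (rev (rcons s' c)))) _ (scott_str (NS M) (map val (r))) _ q a (closed_str _ _) (closed_str _ _) erefl erefl.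
  rewrite U_eq H in E1.
  rewrite rev_rcons /= in E1 *.
  have E2 := @act_left_cons M q' b (map val (rev s')) c _ (closed_str (NS M) (map val r)) (ltn_ord c).
  rewrite consv_str in E2.
  exists (K0 M + (7 + NS M)); split; first by rewrite /K; lia.
  exact: det_steps_trans E1 E2.
- move=> a r q q' b H.
  rewrite !enc_cfgv.
  have E1 := @prefix M (scott_str (NS M) [::]) _ (scott_str (NS M) (map val (r))) _ q a (closed_str _ _) (closed_str _ _) erefl erefl.
  rewrite U_eq H in E1.
  have E2 := @act_left_nil M q' b _ (closed_str (NS M) (map val r)).
  rewrite consv_str in E2.
  exists (K0 M + (6 + NS M)); split; first by rewrite /K; lia.
  exact: det_steps_trans E1 E2.
- move=> s a c r' q q' b H.
  rewrite !enc_cfgv.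
  have E1 := @prefix M (scott_str (NS M) (map val (rev s))) _ (scott_str (NS M) (map val (c :: r'))) _ q a (closed_str _ _) (closed_str _ _) erefl erefl.
  rewrite U_eq H in E1.
  rewrite rev_rcons /=.
  have E2 := @act_right_cons M q' b _ c (map val r') (closed_str (NS M) (map val (rev s))) (ltn_ord c).
  rewrite consv_str in E2.
  exists (K0 M + (7 + NS M)); split; first by rewrite /K; lia.
  exact: det_steps_trans E1 E2.
- move=> s a q q' b H.
  rewrite !enc_cfgv.
  have E1 := @prefix M (scott_str (NS M) (map val (rev s))) _ (scott_str (NS M) [::]) _ q a (closed_str _ _) (closed_str _ _) erefl erefl.
  rewrite U_eq H in E1.
  rewrite rev_rcons /=.
  have E2 := @act_right_nil M q' b _ (closed_str (NS M) (map val (rev s))).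
  rewrite consv_str in E2.
  exists (K0 M + (6 + NS M)); split; first by rewrite /K; lia.
  exact: det_steps_trans E1 E2.
Qed.

Lemma closed_enc M (C : config M) : closed_v 0 (enc_config C).
Proof. case: C => [[[s a] r] q]; rewrite enc_cfgv; apply: closed_cfg; auto. Qed.

Lemma sim_final M (C : config M) : final C ->
  det_steps (K0 M + 3) (App (loop M) (enc_config C)) (Val (Lam (App (Val (Var 0)) (enc_config C)))).
Proof.
case: C => [[[s a] r] q] Hq; rewrite /final /= in Hq.
have Hd : @delta M q a = None.
  have := @delta_dom M q a; rewrite Hq eqxx; by case: (delta _ _).
rewrite !enc_cfgv.
have E1 := @prefix M (scott_str (NS M) (map val (rev s))) _ (scott_str (NS M) (map val r)) _ q a (closed_str _ _) (closed_str _ _) erefl erefl.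
rewrite U_eq Hd in E1.
have E2 := @act_fin M q a _ _ (closed_str (NS M) (map val (rev s))) (closed_str (NS M) (map val r)).
exact: det_steps_trans E1 E2.
Qed.

Lemma run M n (C D : config M) : tm_steps n C D -> final D ->
  exists j, j <= n * K M + (K0 M + 3) /\
    det_steps j (App (loop M) (enc_config C)) (Val (Lam (App (Val (Var 0)) (enc_config D)))).
Proof.
elim=> {n C D} [C|n C C' D Hs _ IH] Hf.
  by exists (K0 M + 3); split; [lia | exact: sim_final].
have [j [Hj Ej]] := @sim_step M _ _ Hs.
have [j' [Hj' Ej']] := IH Hf.
exists (j + j'); split; first by rewrite mulSn; lia.
exact: det_steps_trans Ej Ej'.
Qed.

Lemma closed_loop M : closed_t 0 (loop M).
Proof. by rewrite /loop /= closed_W. Qed.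

Lemma trans_start M k (C : config M) :
  det_steps 2 (App (App (trans M) k) (enc_config C)) (App (App (loop M) (enc_config C)) k).
Proof.
apply: det_cons; first by apply: det_ctx; apply: det_beta.
rewrite /trans /loop /= !subst_closed_v ?closed_W //.
apply: det_cons; first by apply: det_beta.
rewrite /= (proj2 subst_lift_gen) !subst_closed_v ?closed_W //.
exact: det_refl.
Qed.

Lemma det_steps_inv n t u : det_steps n.+1 t u -> exists t', det_step t t' /\ det_steps n t' u.
Proof. move=> H; inversion H; subst; by exists t'. Qed.

Lemma diverge_gen (Pr : term -> Prop) :
  (forall t, Pr t -> exists t', det_step t t' /\ Pr t') -> forall t, Pr t -> diverges t.
Proof.
move=> H t Ht.
pose step (x : {t | Pr t}) : {t | Pr t} :=
  let e := constructive_indefinite_description _ (H _ (proj2_sig x)) in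
  exist _ (proj1_sig e) (proj2 (proj2_sig e)).
exists (fun i => proj1_sig (iter i step (exist _ t Ht))); split => // i.
rewrite iterS /step /=.
by case: (constructive_indefinite_description _ _) => t' [].
Qed.

Lemma step_exists M (C : config M) :
  ~ (exists (n : nat) (D : config M), final D /\ tm_steps n C D) ->
  exists C', tm_step C C' /\ ~ (exists (n : nat) (D : config M), final D /\ tm_steps n C' D).
Proof.
move=> Hn.
have HC : ~ final C by move=> Hf; apply: Hn; exists 0, C; split=> //; exact: tm_refl.
suff [C' HC'] : exists C', tm_step C C'.
  exists C'; split=> // [[n [D [HD Hs]]]]; apply: Hn; exists n.+1, D; split=> //; exact: tm_cons HC' Hs.
clear Hn; move: HC; case: C => [[[s a] r] q]; rewrite /final /= => Hq.
have := @delta_dom M q a.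
case E: (delta q a) => [[[q' b] mv]|] /=; last first.
  by move/esym/negbFE/eqP.
move=> _; case: mv E => E.
- case/lastP: s => [|s' c].
  + by exists ([::], blank M, b :: r, q'); exact: tm_left_edge.
  + by exists (s', c, b :: r, q'); exact: tm_left.
- case: r => [|c r'].
  + by exists (rcons s b, blank M, [::], q'); exact: tm_right_edge.
  + by exists (rcons s b, c, r', q'); exact: tm_right.
- by exists (s, b, r, q'); exact: tm_stay.
Qed.

Theorem mainTheorem8 (M : TM) :
  exists (trans : term) (c : nat),
    closed_t 0 trans /\
    forall (k : value) (C : config M),
      (forall (n : nat) (D : config M),
          final D -> tm_steps n C D ->
          exists m, m <= c * n.+1 /\
            det_steps m (App (App trans k) (enc_config C)) (App (Val k) (enc_config D))) /\
      ((~ exists (n : nat) (D : config M), final D /\ tm_steps n C D) ->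
          diverges (App (App trans k) (enc_config C))).
Proof.
exists (trans M), (K M + 3); split.
  by rewrite /trans /= closed0 ?closed_W.
move=> k C; split.
- move=> n D Hf Hs.
  have [j [Hj Ej]] := @run M n C D Hs Hf.
  exists (2 + (j + 1)); split.
    rewrite /K in Hj *; rewrite mulnC mulSn; nia.
  apply: det_steps_trans (trans_start M k C) _.
  apply: det_steps_trans (det_steps_app k Ej) _.
  apply: det_cons; first exact: det_beta.
  rewrite /= subst_closed_v ?closed_enc //; exact: det_refl.
- move=> Hn.
  pose Pr t := exists n (C' : config M), ~ (exists (n : nat) (D : config M), final D /\ tm_steps n C' D) /\
      det_steps n t (App (App (loop M) (enc_config C')) k).
  apply: (@diverge_gen Pr); last by exists 2, C; split=> //; exact: trans_start.
  move=> t [[|n] [C' [HC' Ht]]]; last first.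
    have [t' [H1 H2]] := @det_steps_inv _ _ _ Ht.
    by exists t'; split=> //; exists n, C'.
  inversion Ht; subst.
  have [C'' [Hs HC'']] := @step_exists M _ HC'.
  have [j [Hj Ej]] := @sim_step M _ _ Hs.
  case: j Hj Ej => [//|j] _ Ej.
  have [t' [H1 H2]] := @det_steps_inv _ _ _ (det_steps_app k Ej).
  by exists t'; split=> //; exists j, C''.
Qed.
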